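(* Let $d\ge1$, $\varepsilon>0$ and fix $T>0$. For $t\ge T$ and $x,y\in\mathbb{R}^d_\varepsilon$ the following hold, where $A\lesssim B$ for exponents means: there exist constants $C,c>0$, independent of $(t,x,y)$ in the indicated range, with $e^{-A/t}\le Ce^{-cB/t}$... more precisely, for $F,G\ge0$, ''$e^{-F/t}\lesssim e^{-G/t}$'' means $e^{-c_1F/t}\le Ce^{-c_2G/t}$ for some constants $C,c_1,c_2>0$, and $\asymp$ means both directions: (i) if $|x|_\rho\vee|y|_\rho>1$, then $e^{-\rho(x,y)^2/t}\asymp e^{-|x-y|^2/t}\gtrsim e^{-(|x|_\rho+|y|_\rho)^2/t}$; (ii) if $|x|_\rho\vee|y|_\rho\le1$, then $e^{-\rho(x,y)^2/t}\asymp e^{-|x-y|^2/t}\asymp e^{-(|x|_\rho+|y|_\rho)^2/t}$; (iii) for any fixed $b<1$, if $|x|_\rho>1>b\ge|y|_\rho$, then $e^{-\rho(x,y)^2/t}\asymp e^{-|x-y|^2/t}\asymp e^{-(|x|_\rho+|y|_\rho)^2/t}$.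
   Context: $\mathbb{R}^d_\varepsilon=\{x\in\mathbb{R}^d:|x|>\varepsilon\}$ (for $d=1$, $(0,\infty)$). For $x\in\mathbb{R}^d_\varepsilon$, $|x|_\rho=|x|-\varepsilon$ (for $d=1$, $|x|_\rho=|x|$), and for $x,y\in\mathbb{R}^d_\varepsilon$, $\rho(x,y)=(|x|_\rho+|y|_\rho)\wedge|x-y|$, where $a\wedge b=\min\{a,b\}$, $a\vee b=\max\{a,b\}$. The implicit constants may depend on $d,\varepsilon,T$ (and on $b$ in (iii)). *)

(* Defs.v *)
From HB Require Import structures.
From mathcomp Require Import all_boot all_order all_algebra.
From mathcomp Require Import all_classical all_reals all_analysis.
Set Implicit Arguments. Unset Strict Implicit. Unset Printing Implicit Defensive.
Import Order.TTheory GRing.Theory Num.Theory.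
Local Open Scope ring_scope.

Section Defs.
Variable R : realType.

Definition enorm (d : nat) (x : 'rV[R]_d) : R := Num.sqrt (\sum_i (x 0 i) ^+ 2).

Definition in_dom (d : nat) (eps : R) (x : 'rV[R]_d) : Prop :=
  if d == 1%N then (forall i, 0 < x 0 i) else eps < enorm x.

Definition rnorm (d : nat) (eps : R) (x : 'rV[R]_d) : R :=
  if d == 1%N then enorm x else enorm x - eps.

Definition rho (d : nat) (eps : R) (x y : 'rV[R]_d) : R :=
  Num.min (rnorm eps x + rnorm eps y) (enorm (x - y)).

Definition exp_lesssim (d : nat) (S : R -> 'rV[R]_d -> 'rV[R]_d -> Prop)
  (F G : 'rV[R]_d -> 'rV[R]_d -> R) : Prop :=
  exists C c1 c2 : R, [/\ 0 < C, 0 < c1, 0 < c2 &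
    forall t x y, S t x y ->
      expR (- (c1 * F x y) / t) <= C * expR (- (c2 * G x y) / t)].

Definition exp_asymp (d : nat) (S : R -> 'rV[R]_d -> 'rV[R]_d -> Prop)
  (F G : 'rV[R]_d -> 'rV[R]_d -> R) : Prop :=
  exp_lesssim S F G /\ exp_lesssim S G F.

End Defs.

(* Main.v *)
Require Import Defs.
From HB Require Import structures.
From mathcomp Require Import all_boot all_order all_algebra.
From mathcomp Require Import all_classical all_reals all_analysis.
From mathcomp Require Import ring lra.
Import Order.TTheory GRing.Theory Num.Theory.
Local Open Scope ring_scope.

Set Implicit Arguments. Unset Strict Implicit.
Section Aux.
Variable R : realType.

Lemma cs_sum (n : nat) (a b : 'I_n -> R) :
  (\sum_i a i * b i) ^+ 2 <= (\sum_i a i ^+ 2) * (\sum_i b i ^+ 2).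
Proof.
have H : (\sum_i \sum_j (a i * b j - a j * b i) ^+ 2) =
   2 * ((\sum_i a i ^+ 2) * (\sum_i b i ^+ 2) - (\sum_i a i * b i) ^+ 2).
  have -> : forall A B S : R, 2 * (A * B - S ^+ 2) = A * B + B * A - 2 * (S * S).
    by move=> A B S; ring.
  rewrite !big_distrlr /= mulr_sumr -big_split -sumrB /=.
  apply: eq_bigr => i _; rewrite mulr_sumr -big_split -sumrB /=.
  apply: eq_bigr => j _; ring.
rewrite -subr_ge0.
have : 0 <= \sum_i \sum_j (a i * b j - a j * b i) ^+ 2.
  by apply: sumr_ge0 => i _; apply: sumr_ge0 => j _; exact: sqr_ge0.
rewrite H; lra.
Qed.

Lemma enorm_ge0 d (x : 'rV[R]_d) : 0 <= enorm x.
Proof. exact: sqrtr_ge0. Qed.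

Lemma enorm_sq d (x : 'rV[R]_d) : enorm x ^+ 2 = \sum_i (x 0 i) ^+ 2.
Proof. rewrite sqr_sqrtr //; apply: sumr_ge0 => i _; exact: sqr_ge0. Qed.

Lemma enorm_tri d (u v : 'rV[R]_d) : enorm (u + v) <= enorm u + enorm v.
Proof.
have hu := enorm_ge0 u; have hv := enorm_ge0 v.
rewrite -(ger0_norm (addr_ge0 hu hv)) -sqrtr_sqr /enorm ler_sqrt; last first.
  exact: sqr_ge0.
under eq_bigr => i _ do rewrite !mxE.
have -> : \sum_i (u 0 i + v 0 i) ^+ 2 =
   \sum_i u 0 i ^+ 2 + \sum_i v 0 i ^+ 2 + 2 * \sum_i u 0 i * v 0 i.
  rewrite mulr_sumr -!big_split /=; apply: eq_bigr => i _; ring.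
have e : (Num.sqrt (\sum_i u 0 i ^+ 2) + Num.sqrt (\sum_i v 0 i ^+ 2)) ^+ 2 =
  enorm u ^+ 2 + enorm v ^+ 2 + 2 * (enorm u * enorm v) by rewrite /enorm; ring.
rewrite e !enorm_sq.
suff : \sum_i u 0 i * v 0 i <= enorm u * enorm v by lra.
rewrite /enorm -sqrtrM; last by apply: sumr_ge0 => i _; exact: sqr_ge0.
rewrite (le_trans (ler_norm _)) // -sqrtr_sqr ler_sqrt; first exact: cs_sum.
apply: mulr_ge0; apply: sumr_ge0 => i _; exact: sqr_ge0.
Qed.

Lemma enorm_opp d (u : 'rV[R]_d) : enorm (- u) = enorm u.
Proof. by rewrite /enorm; congr Num.sqrt; apply: eq_bigr => i _; rewrite mxE sqrrN. Qed.

Lemma D_le d (x y : 'rV[R]_d) : enorm (x - y) <= enorm x + enorm y.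
Proof. by rewrite -(enorm_opp y) enorm_tri. Qed.

Lemma x_le d (x y : 'rV[R]_d) : enorm x <= enorm (x - y) + enorm y.
Proof. by rewrite -{1}(subrK y x) enorm_tri. Qed.

Lemma rnorm_ge0 d (eps : R) (x : 'rV[R]_d) : in_dom eps x -> 0 <= rnorm eps x.
Proof.
rewrite /in_dom /rnorm; case: (d == 1%N) => [_|h]; first exact: enorm_ge0.
by rewrite subr_ge0 ltW.
Qed.

Lemma rnorm_bnd d (eps : R) (x : 'rV[R]_d) : 0 < eps ->
  rnorm eps x <= enorm x <= rnorm eps x + eps.
Proof.
rewrite /rnorm => he; case: (d == 1%N); apply/andP; split; lra.
Qed.

Lemma rnorm_diff d (eps : R) (x y : 'rV[R]_d) :
  rnorm eps x <= enorm (x - y) + rnorm eps y.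
Proof.
have := x_le x y; rewrite /rnorm; case: (d == 1%N); lra.
Qed.

Lemma lesssim_of d (T : R) (S : R -> 'rV[R]_d -> 'rV[R]_d -> Prop) F G c1 c2 K :
  0 < T -> 0 < c1 -> 0 < c2 -> 0 <= K ->
  (forall t x y, S t x y -> T <= t /\ c2 * G x y <= c1 * F x y + K) ->
  exp_lesssim S F G.
Proof.
move=> hT h1 h2 hK h; exists (expR (K / T)), c1, c2; split => // [|t x y /h [ht hb]].
  exact: expR_gt0.
have t0 : 0 < t by lra.
rewrite -expRD ler_expR.
have : K / t <= K / T by rewrite ler_pdivrMr // mulrAC ler_pdivlMr // ler_wpM2l.
have e : - (c1 * F x y) / t = (c2 * G x y - (c1 * F x y + K)) / t - c2 * G x y / t + K / t.
  by field; rewrite gt_eqF.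
rewrite e.
have : (c2 * G x y - (c1 * F x y + K)) / t <= 0.
  by apply: mulr_le0_ge0; [rewrite subr_le0 | rewrite invr_ge0 ltW].
set u := (c2 * G x y - (c1 * F x y + K)) / t.
rewrite -mulNr; lra.
Qed.

End Aux.

Lemma auxA (R : realType) (D P e : R) : 0 <= D -> D <= P + 2 * e ->
  1 * D ^+ 2 <= 2 * P ^+ 2 + 8 * e ^+ 2.
Proof.
move=> h1 h2.
have q1 : D ^+ 2 <= (P + 2 * e) ^+ 2 by rewrite ler_pXn2r // nnegrE; lra.
have q2 : 0 <= (P - 2 * e) ^+ 2 by exact: sqr_ge0.
nra.
Qed.

Arguments lesssim_of {R d} T {S F G} c1 c2 K.

Lemma facts (R : realType) d (eps : R) (x y : 'rV[R]_d) : 0 < eps -> in_dom eps x -> in_dom eps y ->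
  [/\ 0 <= rnorm eps x, 0 <= rnorm eps y, 0 <= enorm (x - y),
      enorm (x - y) <= rnorm eps x + rnorm eps y + 2 * eps &
      [/\ rnorm eps x <= enorm (x - y) + rnorm eps y,
          rho eps x y = rnorm eps x + rnorm eps y \/ rho eps x y = enorm (x - y),
          rho eps x y <= rnorm eps x + rnorm eps y & rho eps x y <= enorm (x - y)]].
Proof.
move=> he hx hy; have h1 := rnorm_ge0 hx; have h2 := rnorm_ge0 hy.
have := rnorm_bnd x he; have := rnorm_bnd y he; move=> /andP[a1 a2] /andP[b1 b2].
have := D_le x y => hD.
split => //; first exact: enorm_ge0; first lra.
split; first exact: rnorm_diff.
- rewrite /rho minEle; case: ifP => _; [left|right] => //.
- by rewrite /rho ge_min lexx.
- by rewrite /rho ge_min lexx orbT.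
Qed.

Theorem lemma2p10 (R : realType) (d : nat) (eps T : R) :
  (1 <= d)%N -> 0 < eps -> 0 < T ->
  (* (i) *)
  (let S := fun (t : R) (x y : 'rV[R]_d) =>
       [/\ T <= t, in_dom eps x, in_dom eps y &
           1 < Num.max (rnorm eps x) (rnorm eps y)] in
   exp_asymp S (fun x y => rho eps x y ^+ 2) (fun x y => enorm (x - y) ^+ 2) /\
   exp_lesssim S (fun x y => (rnorm eps x + rnorm eps y) ^+ 2)
                 (fun x y => enorm (x - y) ^+ 2)) /\
  (* (ii) *)
  (let S := fun (t : R) (x y : 'rV[R]_d) =>
       [/\ T <= t, in_dom eps x, in_dom eps y &
           Num.max (rnorm eps x) (rnorm eps y) <= 1] in
   exp_asymp S (fun x y => rho eps x y ^+ 2) (fun x y => enorm (x - y) ^+ 2) /\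
   exp_asymp S (fun x y => enorm (x - y) ^+ 2)
               (fun x y => (rnorm eps x + rnorm eps y) ^+ 2)) /\
  (* (iii) *)
  (forall b : R, b < 1 ->
   let S := fun (t : R) (x y : 'rV[R]_d) =>
       [/\ T <= t, in_dom eps x, in_dom eps y, 1 < rnorm eps x &
           rnorm eps y <= b] in
   exp_asymp S (fun x y => rho eps x y ^+ 2) (fun x y => enorm (x - y) ^+ 2) /\
   exp_asymp S (fun x y => enorm (x - y) ^+ 2)
               (fun x y => (rnorm eps x + rnorm eps y) ^+ 2)).
Proof.
move=> _ he hT.
have e2 : 0 <= 8 * eps ^+ 2 by rewrite mulr_ge0 // sqr_ge0.
have A : forall x y : 'rV[R]_d, in_dom eps x -> in_dom eps y ->
    1 * enorm (x - y) ^+ 2 <= 2 * rho eps x y ^+ 2 + 8 * eps ^+ 2.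
  move=> x y hx hy; have [h1 h2 h3 h4 [h5 [->|->] h7 h8]] := facts he hx hy; last nra.
  exact: auxA.
have B : forall x y : 'rV[R]_d, in_dom eps x -> in_dom eps y ->
    1 * rho eps x y ^+ 2 <= 1 * enorm (x - y) ^+ 2 + 0.
  move=> x y hx hy; have [h1 h2 h3 h4 [h5 [e|e] h7 h8]] := facts he hx hy; rewrite e; nra.
have C : forall x y : 'rV[R]_d, in_dom eps x -> in_dom eps y ->
    1 * enorm (x - y) ^+ 2 <= 2 * (rnorm eps x + rnorm eps y) ^+ 2 + 8 * eps ^+ 2.
  move=> x y hx hy; have [h1 h2 h3 h4 _] := facts he hx hy.
  exact: auxA.
split; [|split].
- cbv zeta; split; [split|].
  + apply: (lesssim_of T 2 1 (8 * eps ^+ 2)) => // t x y [ht hx hy _]; split => //.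
    exact: A.
  + apply: (lesssim_of T 1 1 0) => // t x y [ht hx hy _]; split => //.
    exact: B.
  + apply: (lesssim_of T 2 1 (8 * eps ^+ 2)) => // t x y [ht hx hy _]; split => //.
    exact: C.
- cbv zeta; split; split.
  + apply: (lesssim_of T 2 1 (8 * eps ^+ 2)) => // t x y [ht hx hy _]; split => //.
    exact: A.
  + apply: (lesssim_of T 1 1 0) => // t x y [ht hx hy _]; split => //.
    exact: B.
  + apply: (lesssim_of T 1 1 4) => // t x y [ht hx hy]; rewrite ge_max => /andP[m1 m2].
    split => //; have [h1 h2 h3 h4 _] := facts he hx hy; nra.
  + apply: (lesssim_of T 2 1 (8 * eps ^+ 2)) => // t x y [ht hx hy _]; split => //.
    exact: C.
- move=> b hb; cbv zeta; split; split.
  + apply: (lesssim_of T 2 1 (8 * eps ^+ 2)) => // t x y [ht hx hy _ _]; split => //.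
    exact: A.
  + apply: (lesssim_of T 1 1 0) => // t x y [ht hx hy _ _]; split => //.
    exact: B.
  + apply: (lesssim_of T 2 1 8) => // t x y [ht hx hy _ hyb].
    split => //; have [h1 h2 h3 h4 [h5 _ _ _]] := facts he hx hy.
    have := @auxA R (rnorm eps x + rnorm eps y) (enorm (x - y)) 1.
    have hP : rnorm eps x + rnorm eps y <= enorm (x - y) + 2 * 1 by lra.
    move=> H; have := H (addr_ge0 h1 h2) hP; rewrite expr1n mulr1; exact.
  + apply: (lesssim_of T 2 1 (8 * eps ^+ 2)) => // t x y [ht hx hy _ _]; split => //.
    exact: C.
Qed.
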